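(* Let $G$ be a finite group acting $2$-transitively on a finite set $X$, let $x\in X$, and suppose the stabilizer $H=\mathrm{Stab}_G(x)$ is mixable. Then $G$ is mixable, and \[\mathrm{mixlen}(G)\le \mathrm{mixlen}(H)+\mathrm{mixlen}(H,X\setminus\{x\})+1.\]
   Context: For a finite group $G$, a random subproduct is a random element $g_1^{\epsilon_1}\cdots g_k^{\epsilon_k}$ with $g_1,\dots,g_k\in G$ fixed and $\epsilon_1,\dots,\epsilon_k$ independent Bernoulli random variables, $\epsilon_i\sim\mathrm{Ber}(p_i)$, $p_i\in[0,1]$; $k$ is its length. $G$ is mixable if some random subproduct is exactly uniform on $G$, and $\mathrm{mixlen}(G)$ is the minimal such length. For a transitive action of a group $H$ on a finite set $Y$, the action is mixable if for some (equivalently every) $y_0\in Y$ there is a random subproduct $\mathbf{h}$ in $H$ with $\mathbf{h}y_0$ uniform on $Y$, and $\mathrm{mixlen}(H,Y)$ is the minimal length of such a random subproduct. (By $2$-transitivity, $H$ acts transitively on $X\setminus\{x\}$.) *)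

(* Defs.v *)
From HB Require Import structures.
From mathcomp Require Import all_boot all_order all_algebra all_fingroup all_solvable.
From mathcomp Require Import boolp reals.
Set Implicit Arguments. Unset Strict Implicit. Unset Printing Implicit Defensive.
Import Order.TTheory GRing.Theory Num.Theory.

Local Open Scope ring_scope.

Section RandomSubproducts.
Variables (R : realType) (gT : finGroupType).

Definition subprod k (g : 'I_k -> gT) (e : {ffun 'I_k -> bool}) : gT :=
  (\prod_(i < k) (if e i then g i else 1))%g.

Definition bern_weight k (p : 'I_k -> R) (e : {ffun 'I_k -> bool}) : R :=
  \prod_(i < k) (if e i then p i else 1 - p i).

Definition subprod_law k (g : 'I_k -> gT) (p : 'I_k -> R) (z : gT) : R :=
  \sum_(e : {ffun 'I_k -> bool} | subprod g e == z) bern_weight p e.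

Definition probs k (p : 'I_k -> R) := forall i, 0 <= p i <= 1.

Definition mixes_in (H : {group gT}) (k : nat) : Prop :=
  exists (g : 'I_k -> gT) (p : 'I_k -> R),
    [/\ forall i, g i \in H, probs p &
        forall z, z \in H -> subprod_law g p z = #|H|%:R^-1].

Definition mixable (H : {group gT}) : Prop := exists k, mixes_in H k.

Definition mixlen (H : {group gT}) : nat :=
  match pselect (exists k, `[< mixes_in H k >]) with
  | left ex => ex_minn ex
  | right _ => 0%N
  end.

Variable (T : finType) (to : {action gT &-> T}).

(* Left action associated with the (right) MathComp action: h . y := to y (h^-1)%g. *)
Definition lact (h : gT) (y : T) : T := to y (h^-1)%g.

Definition act_mixes_in (H : {group gT}) (Y : {set T}) (k : nat) : Prop :=
  exists2 y0, y0 \in Y &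
  exists (g : 'I_k -> gT) (p : 'I_k -> R),
    [/\ forall i, g i \in H, probs p &
        forall y, y \in Y ->
          \sum_(e : {ffun 'I_k -> bool} | lact (subprod g e) y0 == y) bern_weight p e
          = #|Y|%:R^-1].

Definition act_mixable (H : {group gT}) (Y : {set T}) : Prop :=
  exists k, act_mixes_in H Y k.

Definition act_mixlen (H : {group gT}) (Y : {set T}) : nat :=
  match pselect (exists k, `[< act_mixes_in H Y k >]) with
  | left ex => ex_minn ex
  | right _ => 0%N
  end.

End RandomSubproducts.

(* Main.v *)
Require Import Defs.
From HB Require Import structures.
From mathcomp Require Import all_boot all_order all_algebra all_fingroup all_solvable.
From mathcomp Require Import boolp reals.
From mathcomp Require Import zify ring lra.
Set Implicit Arguments. Unset Strict Implicit. Unset Printing Implicit Defensive.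
Import Order.TTheory GRing.Theory Num.Theory.

Section Gen.
Local Open Scope ring_scope.
Variables (R : realType) (gT : finGroupType).

Definition Ex k (g : 'I_k -> gT) (p : 'I_k -> R) (f : gT -> R) : R :=
  \sum_(e : {ffun 'I_k -> bool}) bern_weight p e * f (subprod g e).

Lemma law_Ex k (g : 'I_k -> gT) p z :
  subprod_law g p z = Ex g p (fun u => (u == z)%:R).
Proof.
rewrite /subprod_law /Ex big_mkcond; apply: eq_bigr => e _.
by case: eqP => _; rewrite ?mulr1 ?mulr0.
Qed.

Lemma Ex_mkcond k (g : 'I_k -> gT) p (P : pred gT) :
  \sum_(e : {ffun 'I_k -> bool} | P (subprod g e)) bern_weight p e
  = Ex g p (fun u => (P u)%:R).
Proof.
rewrite /Ex big_mkcond; apply: eq_bigr => e _.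
by case: (P _); rewrite ?mulr1 ?mulr0.
Qed.

Lemma Ex_law k (g : 'I_k -> gT) p f :
  Ex g p f = \sum_z subprod_law g p z * f z.
Proof.
rewrite /Ex (partition_big (subprod g) predT) //=.
apply: eq_bigr => z _; rewrite /subprod_law big_distrl /=.
by apply: eq_bigr => e /eqP ->.
Qed.

Lemma Ex_mass k (p : 'I_k -> R) :
  \sum_(e : {ffun 'I_k -> bool}) bern_weight p e = 1.
Proof.
rewrite /bern_weight -(bigA_distr_bigA (fun i (b : bool) => if b then p i else 1 - p i)) /=.
by apply: big1 => i _; rewrite big_bool /= addrC subrK.
Qed.

Lemma Ex_congr (H : {group gT}) k (g : 'I_k -> gT) p f f' :
  (forall i, g i \in H) -> {in H, f =1 f'} -> Ex g p f = Ex g p f'.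
Proof.
move=> gH ff; apply: eq_bigr => e _; rewrite ff //.
by apply: group_prod => i _; case: (e i) => //; rewrite group1.
Qed.

Lemma Ex_const k (g : 'I_k -> gT) p c : Ex g p (fun _ => c) = c.
Proof. by rewrite /Ex -big_distrl /= Ex_mass mul1r. Qed.

Lemma Ex_lin k (g : 'I_k -> gT) p a b f1 f2 :
  Ex g p (fun u => a * f1 u + b * f2 u) = a * Ex g p f1 + b * Ex g p f2.
Proof.
rewrite /Ex !big_distrr -big_split /=; apply: eq_bigr => e _.
by rewrite mulrDr !mulrA [a * _]mulrC [b * _]mulrC.
Qed.

Lemma Ex_unif (H : {group gT}) k (g : 'I_k -> gT) p f :
  (forall i, g i \in H) -> (forall z, z \in H -> subprod_law g p z = #|H|%:R^-1) ->
  Ex g p f = #|H|%:R^-1 * \sum_(z in H) f z.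
Proof.
move=> gH unif; rewrite Ex_law (bigID (mem H)) /= [X in _ + X]big1 ?addr0.
  by rewrite big_distrr; apply: eq_bigr => z zH; rewrite unif.
move=> z zH; rewrite /subprod_law big_pred0 ?mul0r // => e.
apply/negP => /eqP ez; move/negP: zH; apply; rewrite -ez.
by apply: group_prod => i _; case: (e i) => //; rewrite group1.
Qed.

Definition catf (A : Type) m n (a : 'I_m -> A) (b : 'I_n -> A) : 'I_(m + n) -> A :=
  fun i => match split i with inl j => a j | inr j => b j end.

Lemma catf_l (A : Type) m n (a : 'I_m -> A) (b : 'I_n -> A) i : catf a b (lshift n i) = a i.
Proof. by rewrite /catf (unsplitK (inl _ i)). Qed.
Lemma catf_r (A : Type) m n (a : 'I_m -> A) (b : 'I_n -> A) i : catf a b (rshift m i) = b i.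
Proof. by rewrite /catf (unsplitK (inr _ i)). Qed.

Definition mkf m n (pr : {ffun 'I_m -> bool} * {ffun 'I_n -> bool}) : {ffun 'I_(m+n) -> bool} :=
  [ffun i => catf pr.1 pr.2 i].
Definition unmkf m n (e : {ffun 'I_(m+n) -> bool}) : {ffun 'I_m -> bool} * {ffun 'I_n -> bool} :=
  ([ffun i => e (lshift n i)], [ffun i => e (rshift m i)]).

Lemma Ex_cat m n (g1 : 'I_m -> gT) (g2 : 'I_n -> gT) p1 p2 f :
  Ex (catf g1 g2) (catf p1 p2) f = Ex g1 p1 (fun u => Ex g2 p2 (fun v => f (u * v)%g)).
Proof.
rewrite /Ex (reindex (@mkf m n)) /=; last first.
  exists (@unmkf m n) => [[e1 e2] _ | e _].
    by congr pair; apply/ffunP => i; rewrite !ffunE ?catf_l ?catf_r.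
  apply/ffunP => i; rewrite !ffunE /catf; case: splitP => j ij; rewrite ffunE; congr (e _); apply: val_inj; by rewrite /= ij.
rewrite -(pair_bigA _ (fun e1 e2 => bern_weight (catf p1 p2) (mkf (e1, e2)) *
                  f (subprod (catf g1 g2) (mkf (e1, e2))))) /=.
apply: eq_bigr => e1 _; rewrite big_distrr; apply: eq_bigr => e2 _ /=.
rewrite /bern_weight /subprod !big_split_ord /=.
rewrite mulrA; congr (_ * _ * f (_ * _)%g);
by apply: eq_bigr => i _; rewrite !ffunE ?catf_l ?catf_r.
Qed.

Lemma Ex1 (g : 'I_1 -> gT) p f :
  Ex g p f = (1 - p ord0) * f 1%g + p ord0 * f (g ord0).
Proof.
rewrite /Ex (reindex (fun b : bool => [ffun _ : 'I_1 => b])) /=; last first.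
  exists (fun e : {ffun 'I_1 -> bool} => e ord0) => [b _ | e _]; first by rewrite ffunE.
  apply/ffunP => i; rewrite !ffunE; congr (e _); apply: val_inj; by case: i => [[]].
rewrite big_bool /= /bern_weight /subprod !big_ord1 !ffunE /= addrC.
done.
Qed.

End Gen.

Section Act.
Local Open Scope ring_scope.
Variables (R : realType) (gT : finGroupType) (T : finType) (to : {action gT &-> T}).

Lemma sum_ind_card (H : {group gT}) (P : pred gT) :
  \sum_(u in H) ((P u)%:R : R) = #|[set u in H | P u]|%:R.
Proof.
rewrite -sum1_card natr_sum big_mkcond [RHS]big_mkcond /=.
by apply: eq_bigr => u _; rewrite inE; case: (u \in H); case: (P u).
Qed.

Lemma act_unif (H : {group gT}) (Y : {set T}) y0 k (g : 'I_k -> gT) (p : 'I_k -> R) :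
  [transitive H, on Y | to] -> y0 \in Y -> (forall i, g i \in H) ->
  (forall z, z \in H -> subprod_law g p z = #|H|%:R^-1) ->
  forall y, y \in Y ->
   \sum_(e : {ffun 'I_k -> bool} | lact to (subprod g e) y0 == y) bern_weight p e = #|Y|%:R^-1.
Proof.
move=> tH y0Y gH unif y yY.
rewrite (Ex_mkcond g p (fun u => lact to u y0 == y)) (Ex_unif _ gH unif).
have -> : \sum_(z in H) ((lact to z y0 == y)%:R : R) = \sum_(z in H) ((to y0 z == y)%:R : R).
  rewrite [RHS](reindex_inj invg_inj) /=.
  by apply: eq_big => u; rewrite ?groupV // /lact invgK.
rewrite sum_ind_card.
have : y \in orbit to H y0 by rewrite (atransP tH _ y0Y).
case/orbitP => b bH <-.
have -> : [set u in H | to y0 u == to y0 b] = amove to H y0 (to y0 b) by [].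
rewrite amove_act ?subsetT // card_rcoset.
have := card_orbit_stab to H y0; rewrite (atransP tH _ y0Y) => cardH.
rewrite -cardH natrM invfM -mulrA mulVf ?mulr1 //.
by rewrite pnatr_eq0 -lt0n cardG_gt0.
Qed.

End Act.

Lemma catf_P (A : Type) (P : A -> Prop) m n (a : 'I_m -> A) (b : 'I_n -> A) :
  (forall i, P (a i)) -> (forall i, P (b i)) -> forall i, P (catf a b i).
Proof. by move=> Pa Pb i; rewrite /catf; case: split. Qed.

Unset Implicit Arguments.
Set Strict Implicit.

Theorem mainTheorem16 (R : realType) (gT : finGroupType) (G : {group gT})
    (T : finType) (to : {action gT &-> T}) (X : {set T}) (x : T) :
  [transitive^2 G, on X | to] -> x \in X ->
  mixable R 'C_G[x | to]%G ->
  mixable R G /\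
  (mixlen R G <= mixlen R 'C_G[x | to]%G
                 + act_mixlen R to 'C_G[x | to]%G (X :\ x) + 1)%N.
Proof.
move=> t2 xX [a0 mixH0].
set H := 'C_G[x | to]%G.
have tG : [transitive G, on X | to] := ntransitive1 (isT : 0 < 2)%N t2.
have tH : [transitive H, on X :\ x | to] :=
  ntransitive1 (isT : 0 < 1)%N (stab_ntransitive (isT : 0 < 1)%N xX t2).
have HG : H \subset G := subsetIl _ _.
have [a mixa aeq] : exists2 a, mixes_in R H a & mixlen R H = a.
  rewrite /mixlen; case: pselect => [ex|nex].
    by case: ex_minnP => m /asboolP ma _; exists m.
  by exfalso; apply: nex; exists a0; apply/asboolP.
have [y0 y0Y _] : exists2 y0, y0 \in X :\ x & True.
  by case/imsetP: tH => y0 y0Y _; exists y0.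
have amix : act_mixes_in R to H (X :\ x) a.
  case: mixa => g1 [p1 [g1H pr1 unif1]].
  exists y0 => //; exists g1, p1; split => //.
  exact: act_unif tH y0Y g1H unif1.
have [b mixb beq] : exists2 b, act_mixes_in R to H (X :\ x) b &
     act_mixlen R to H (X :\ x) = b.
  rewrite /act_mixlen; case: pselect => [ex|nex].
    by case: ex_minnP => m /asboolP ma _; exists m.
  by exfalso; apply: nex; exists a; apply/asboolP.
have mixG : mixes_in R G (b + (1 + a)).
  case: mixa => g1 [p1 [g1H pr1 unif1]].
  case: mixb => y1 y1Y [g2 [p2 [g2H pr2 unif2]]].
  have [y1x y1X] := setD1P y1Y.
  have : y1 \in orbit to G x by rewrite (atransP tG _ xX).
  case/orbitP => c cG cx.
  pose g := (c^-1)%g.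
  pose q : R := (1 - (#|X|%:R)^-1)%R.
  have cardG : #|G| = (#|X| * #|H|)%N.
    by have := card_orbit_stab to G x; rewrite (atransP tG _ xX).
  have cardX : #|X| = (#|X :\ x| + 1)%N by rewrite (cardsD1 x X) xX addnC.
  have nY0 : (#|X :\ x|%:R != 0 :> R)%R.
    by rewrite pnatr_eq0 -lt0n; apply/card_gt0P; exists y1.
  have nH0 : (#|H|%:R != 0 :> R)%R by rewrite pnatr_eq0 -lt0n cardG_gt0.
  have nX0 : (#|X :\ x|%:R + 1 != 0 :> R)%R.
    by rewrite -(natrD _ _ 1) pnatr_eq0 addn1.
  exists (catf g2 (catf (fun _ : 'I_1 => g) g1)), (catf p2 (catf (fun _ : 'I_1 => q) p1)).
  split.
    apply: (catf_P (P := fun u => u \in G)) => [i|]; first exact: (subsetP HG _ (g2H i)).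
    apply: (catf_P (P := fun u => u \in G)) => [i|i]; first by rewrite groupV.
    exact: (subsetP HG _ (g1H i)).
    apply: (catf_P (P := fun r : R => 0 <= r <= 1)%R) => [i|]; first exact: pr2.
    apply: (catf_P (P := fun r : R => 0 <= r <= 1)%R) => [i|i]; last exact: pr1.
    rewrite /q cardX natrD.
    have n0 : (0 <= #|X :\ x|%:R :> R)%R := ler0n _ _.
    have p0 : (0 < #|X :\ x|%:R + 1 :> R)%R by lra.
    have i0 : (0 < (#|X :\ x|%:R + 1)^-1 :> R)%R by rewrite invr_gt0.
    have i1 : ((#|X :\ x|%:R + 1)^-1 <= 1 :> R)%R by rewrite invf_le1 //; lra.
    by apply/andP; split; lra.
  move=> z zG; rewrite law_Ex !Ex_cat.
  have indlem : forall u v : gT,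
      (\sum_(t in H) (((u * (v * t))%g == z)%:R : R) = ((((u * v)^-1 * z)%g \in H)%:R))%R.
    move=> u v; set w := ((u * v)^-1 * z)%g.
    have eqw : forall t, ((u * (v * t))%g == z) = (t == w).
      move=> t; rewrite /w mulgA; apply/eqP/eqP => [<-|->]; first by rewrite mulKg.
      by rewrite mulKVg.
    under eq_bigr do rewrite eqw.
    case: (boolP (w \in H)) => wH.
      rewrite (bigD1 w) //= eqxx big1 ?addr0 // => t /andP[_ /negbTE ->] //.
    rewrite big1 // => t tH0; case: eqP => // tw; move: wH; by rewrite -tw tH0.
  have inner : forall u, (Ex (fun _ : 'I_1 => g) (fun _ => q)
          (fun v => Ex g1 p1 (fun t => (((u * (v * t))%g == z)%:R : R))) =
      #|H|%:R^-1 * (1 - q) * (((u^-1 * z)%g \in H)%:R) +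
       #|H|%:R^-1 * q * (((g^-1 * u^-1 * z)%g \in H)%:R))%R.
    move=> u; rewrite Ex1 !(Ex_unif _ g1H unif1) !indlem mulg1 invMg.
    ring.
  have -> : (Ex g2 p2 (fun u => Ex (catf (fun _ : 'I_1 => g) g1) (catf (fun _ => q) p1)
          (fun v => (((u * v)%g == z)%:R : R))) =
     Ex g2 p2 (fun u => (#|H|%:R^-1 * (1 - q) * (((u^-1 * z)%g \in H)%:R) +
       #|H|%:R^-1 * q * (((g^-1 * u^-1 * z)%g \in H)%:R))))%R.
    by apply: eq_bigr => e _; rewrite Ex_cat inner.
  rewrite Ex_lin /q cardG cardX natrM natrD.
  have gH : (g \in H) = false.
    apply/negbTE/negP => gH; move: y1x; rewrite -cx.
    have : c \in H by rewrite -[c]invgK groupV.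
    by rewrite in_setI => /andP[_ /astab1P ->]; rewrite eqxx.
  case: (boolP (z \in H)) => zH.
    have E1 : (Ex g2 p2 (fun u => (((u^-1 * z)%g \in H)%:R : R)) = 1)%R.
      transitivity (Ex g2 p2 (fun _ => 1%R)); last exact: Ex_const.
      apply: (Ex_congr _ g2H) => u uH /=.
      by rewrite groupM ?groupV.
    have E2 : (Ex g2 p2 (fun u => (((g^-1 * u^-1 * z)%g \in H)%:R : R)) = 0)%R.
      transitivity (Ex g2 p2 (fun _ => 0%R)); last exact: Ex_const.
      apply: (Ex_congr _ g2H) => u uH /=.
      suff -> : ((g^-1 * u^-1 * z)%g \in H) = false by [].
      apply/negP => gin; move: gH; rewrite -[g]invgK groupV.
      have -> : (g^-1 = (g^-1 * u^-1 * z) * (u^-1 * z)^-1)%g by rewrite -[(g^-1 * u^-1 * z)%g]mulgA mulgK.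
      by rewrite groupM ?groupV ?gin // groupM ?groupV.
    rewrite E1 E2; field.
    by rewrite nH0 nX0.
  have E1 : (Ex g2 p2 (fun u => (((u^-1 * z)%g \in H)%:R : R)) = 0)%R.
    transitivity (Ex g2 p2 (fun _ => 0%R)); last exact: Ex_const.
    apply: (Ex_congr _ g2H) => u uH /=.
    suff -> : ((u^-1 * z)%g \in H) = false by [].
    apply/negP => uz; move/negP: zH; apply.
    by rewrite -(mulKVg u z) groupM.
  have yY : to x z^-1%g \in X :\ x.
    rewrite !inE -(atransP tG _ xX) mem_orbit ?groupV // andbT.
    apply/eqP => e; move/negP: zH; apply.
    by rewrite -groupV in_setI groupV zG /=; apply/astab1P.
  have E2 : (Ex g2 p2 (fun u => (((g^-1 * u^-1 * z)%g \in H)%:R : R)) =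
             #|X :\ x|%:R^-1)%R.
    rewrite -(unif2 _ yY) (Ex_mkcond g2 p2 (fun u => lact to u y1 == to x z^-1)%g).
    apply: (Ex_congr _ g2H) => u uH /=.
    congr (_%:R)%R; congr (nat_of_bool _).
    have uG := subsetP HG _ uH.
    have gG : (g^-1 * u^-1 * z)%g \in G by rewrite !groupM ?groupV ?invgK.
    rewrite in_setI gG /= /lact /g invgK -cx -actM.
    apply/idP/idP => [/astab1P e | /eqP e].
      by apply/eqP; move: (congr1 (fun y => to y z^-1%g) e); rewrite /= (actM to x (c * u^-1)%g z) actK.
    by apply/astab1P; rewrite actM e -actM mulVg act1.
  rewrite E1 E2; field.
  by rewrite nH0 nX0 nY0.
split; first by exists (b + (1 + a))%N.
rewrite aeq beq; rewrite /mixlen; case: pselect => [ex|//].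
case: ex_minnP => m _ /(_ (b + (1 + a))%N) min.
rewrite (leq_trans (min _)) //; first exact/asboolP.
lia.
Qed.
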